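(* For every finitely supported permutation $\tau$ of $[0,1[$ and every partition $\mathcal P$ associated with $\tau$, one has $\varepsilon(\tau,\mathcal P)=\operatorname{sgn}(\tau)$.
   Context: $X=[0,1[$; $\widehat{\operatorname{PC}^{\bowtie}}$ is the group of bijections $X\to X$ continuous outside a finite subset, which contains the group ${\mathfrak S}_{\mathrm{fin}}$ of finitely supported permutations; $\operatorname{sgn}:{\mathfrak S}_{\mathrm{fin}}\to\mathbb{Z}/2\mathbb{Z}$ is the classical signature. For $h\in\widehat{\operatorname{PC}^{\bowtie}}$, a partition associated with $h$ is a finite partition $\mathcal P=\{I_1,\dots,I_n\}$ of $X$ into intervals $I_j=[\alpha_j,b_j[$ such that $h$ is continuous on the open interval $I_j^\circ=]\alpha_j,b_j[$ for each $j$ (then $h$ is strictly monotone on $I_j^\circ$ and $h(I_j^\circ)$ is an open interval). Let $\beta_j$ be the left endpoint of $h(I_j^\circ)$; the sets $\{h(\alpha_j)\}$ and $\{\beta_j\}$ coincide, and $\sigma_{(h,\mathcal P)}\in{\mathfrak S}_{\mathrm{fin}}$ sends $h(\alpha_j)$ to $\beta_j$ for each $j$ and fixes all other points. $R(h,\mathcal P)$ is the number of $j$ with $h$ decreasing on $I_j^\circ$, and $\varepsilon(h,\mathcal P)=R(h,\mathcal P)+\operatorname{sgn}(\sigma_{(h,\mathcal P)})\bmod 2$. *)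

(* Defs.v *)
From HB Require Import structures.
From mathcomp Require Import all_boot all_order all_algebra all_fingroup.
From mathcomp Require Import finmap.
From mathcomp Require Import all_classical all_reals all_analysis.
Set Implicit Arguments. Unset Strict Implicit. Unset Printing Implicit Defensive.
Import Order.TTheory GRing.Theory Num.Theory numFieldNormedType.Exports.
Local Open Scope classical_set_scope.
Local Open Scope ring_scope.

Section Defs.
Variable R : realType.

Definition X : set R := [set x | 0 <= x < 1].

Definition supp (f : R -> R) : set R := [set x | X x /\ f x != x].

Definition is_fin_perm (f : R -> R) : Prop :=
  [/\ (forall x, X x -> X (f x)),
      {in X &, injective f},
      (forall y, X y -> exists2 x, X x & f x = y)
    & finite_set (supp f)].

(* classical signature (in Z/2Z = bool: true = odd) of a finitely supported
   permutation f of X: the parity of the permutation of the finite set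
   supp f induced by f (false if f does not induce a permutation of it). *)
Definition fs_sign (f : R -> R) : bool :=
  let A := fset_set (supp f) in
  let g : {ffun A -> A} := [ffun x => insubd x (f (val x))] in
  (if injectiveb g as b return injectiveb g = b -> bool
   then fun H => odd_perm (Perm H) else fun _ => false) (erefl _).

(* a finite partition of X into intervals [a j, a j.+1[, j < n *)
Definition subdivision (n : nat) (a : nat -> R) : Prop :=
  [/\ a 0%N = 0, a n = 1 & forall j, (j < n)%N -> a j < a j.+1].

Definition assoc_partition (h : R -> R) (n : nat) (a : nat -> R) : Prop :=
  subdivision n a /\
  forall j, (j < n)%N -> {within `]a j, a j.+1[, continuous h}.

Definition beta (h : R -> R) (a : nat -> R) (j : nat) : R :=
  inf (h @` `]a j, a j.+1[%classic).

Definition sigmaP (h : R -> R) (n : nat) (a : nat -> R) (y : R) : R :=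
  match [pick j : 'I_n | h (a j) == y] with
  | Some j => beta h a j
  | None => y
  end.

Definition decr_on (h : R -> R) (a : nat -> R) (j : nat) : Prop :=
  forall x y, a j < x -> x < y -> y < a j.+1 -> h y < h x.

Definition Rcount (h : R -> R) (n : nat) (a : nat -> R) : nat :=
  #|[set j : 'I_n | `[< decr_on h a j >]]|.

Definition epsilon (h : R -> R) (n : nat) (a : nat -> R) : bool :=
  odd (Rcount h n a) (+) fs_sign (sigmaP h n a).

End Defs.

(* Main.v *)
Require Import Defs.
From HB Require Import structures.
From mathcomp Require Import all_boot all_order all_algebra all_fingroup.
From mathcomp Require Import finmap.
From mathcomp Require Import all_classical all_reals all_analysis.
From mathcomp Require Import lra.
Import Order.TTheory GRing.Theory Num.Theory numFieldNormedType.Exports.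
Local Open Scope classical_set_scope.
Local Open Scope ring_scope.
Lemma near_notin (R : realType) (S : set R) (x : R) : finite_set S ->
  \forall y \near x^', ~ S y.
Proof.
move=> fS.
have acc : accessible_space R.
  apply: hausdorff_accessible; exact: Rhausdorff.
have cS : closed (S `\ x).
  have := (proj1 (@accessible_finite_set_closed R) acc (S `\ x)); apply; exact: finite_setD.
have : nbhs x (~` (S `\ x)).
  apply: open_nbhs_nbhs; split; first exact: closed_openC.
  by move=> [_]; apply.
move=> /nbhs_dnbhs H.
near=> y.
have yx : y != x by near: y; exact: nbhs_dnbhs_neq.
have : (~` (S `\ x)) y by near: y.
move=> H1 Sy; apply: H1; split => //; exact/eqP.
Unshelve. all: by end_near. Qed.
Lemma id_on_itv (R : realType) (tau : R -> R) (u v : R) :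
  is_fin_perm tau -> 0 <= u -> v <= 1 -> {within `]u, v[, continuous tau} ->
  forall x, u < x -> x < v -> tau x = x.
Proof.
move=> [_ _ _ fS] u0 v1 ct x ux xv.
have oI : open `]u, v[%classic by exact: itv_open.
have Ix : `]u, v[%classic x by rewrite /= in_itv /= ux xv.
move: ct; rewrite continuous_open_subspace // => ct.
have cx : tau @ x --> tau x by apply: ct; rewrite inE.
have nI : \forall y \near x, `]u, v[%classic y by exact: open_nbhs_nbhs.
have e : {near x^', id =1 tau}.
  near=> y.
  have : `]u, v[%classic y by near: y; exact: nbhs_dnbhs.
  rewrite /= in_itv /= => /andP[uy yv].
  have : ~ supp tau y by near: y; exact: near_notin.
  move=> ns; apply/esym/eqP; apply: contra_notT ns => ne; split => //.
  rewrite /X /=; apply/andP; split; first exact: (le_trans u0 (ltW uy)).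
  exact: (lt_le_trans yv v1).
have c1 : tau @ x^' --> x.
  apply: cvg_trans (near_eq_cvg e) _; exact: cvg_within.
have c2 : tau @ x^' --> tau x by exact: cvg_within_filter.
exact: (cvg_unique _ c2 c1).
Unshelve. all: by end_near. Qed.
Lemma dep_if (b : bool) (F : b = true -> bool) (G : b = false -> bool) (H : b = true) :
  (if b as c return b = c -> bool then F else G) (erefl b) = F H.
Proof.
move: F G H; case: b => F G H //.
by rewrite (eq_irrelevance H erefl).
Qed.

Definition fsg (R : realType) (S : set R) (f : R -> R) : bool :=
  let A := fset_set S in
  let g : {ffun A -> A} := [ffun x => insubd x (f (val x))] in
  (if injectiveb g as b return injectiveb g = b -> bool
   then fun H => odd_perm (Perm H) else fun _ => false) (erefl _).

Arguments fsg {R}.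
Lemma fs_signE (R : realType) (f : R -> R) : fs_sign f = fsg (supp f) f.
Proof. by []. Qed.

Lemma fs_sign_inv (R : realType) (f g : R -> R) : supp f = supp g ->
  finite_set (supp g) ->
  (forall x, supp g x -> supp g (f x)) -> (forall x, supp g x -> supp g (g x)) ->
  (forall x, supp g x -> f (g x) = x) -> (forall x, supp g x -> g (f x) = x) ->
  fs_sign f = fs_sign g.
Proof.
move=> efg fS sf sg fg gf.
rewrite !fs_signE efg /fsg.
set S := supp g.
set A := fset_set S.
have memA : forall y, (y \in A) = (y \in S) by move=> y; rewrite in_fset_set.
have inA : forall x : A, S (val x).
  by move=> x; apply: set_mem; rewrite -memA; exact: valP.
set F : {ffun A -> A} := [ffun x => insubd x (f (val x))].
set G : {ffun A -> A} := [ffun x => insubd x (g (val x))].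
have vF : forall x, val (F x) = f (val x).
  by move=> x; rewrite ffunE insubdK // memA; apply: mem_set; apply: sf; apply: inA.
have vG : forall x, val (G x) = g (val x).
  by move=> x; rewrite ffunE insubdK // memA; apply: mem_set; apply: sg; apply: inA.
have FG : forall x, F (G x) = x.
  by move=> x; apply: val_inj; rewrite vF vG fg //; apply: inA.
have GF : forall x, G (F x) = x.
  by move=> x; apply: val_inj; rewrite vG vF gf //; apply: inA.
have HF : injectiveb F by apply/injectiveP; exact: (can_inj GF).
have HG : injectiveb G by apply/injectiveP; exact: (can_inj FG).
rewrite (dep_if _ _ _ HF) (dep_if _ _ _ HG).
have -> : Perm HF = (Perm HG)^-1%g.
  apply: (mulgI (Perm HG)); rewrite mulgV; apply/permP => x.
  by rewrite permM perm1 -!pvalE /= FG.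
by rewrite odd_permV.
Qed.

Theorem proposition3p4 (R : realType) (tau : R -> R) (n : nat) (a : nat -> R) :
  is_fin_perm tau -> assoc_partition tau n a ->
  epsilon tau n a = fs_sign tau.
Proof.
move=> Hp [[a0 an ainc] ct].
have Hp' := Hp.
case: Hp' => tX tinj tsurj fS.
have amono : forall i k, (i <= k)%N -> (k <= n)%N -> a i <= a k.
  move=> i k ik kn; elim: k ik kn => [|k IH] ik kn.
    by move: ik; rewrite leqn0 => /eqP ->.
  case: (ltngtP i k.+1) ik => // [ik|<-] _; last by [].
  apply: le_trans (IH ik (ltnW kn)) (ltW (ainc k kn)).
have aX : forall j, (j < n)%N -> X (a j).
  move=> j jn; rewrite /X /=; apply/andP; split.
    by rewrite -a0; apply: amono => //; apply: ltnW.
  by rewrite -an; apply: lt_le_trans (ainc j jn) _; apply: amono.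
have idI : forall j, (j < n)%N -> forall x, a j < x -> x < a j.+1 -> tau x = x.
  move=> j jn; apply: id_on_itv => //; last exact: ct.
    by case/andP: (aX j jn).
  by rewrite -an; apply: amono.
have loc : forall x, 0 <= x -> forall k, (k <= n)%N -> x < a k ->
    exists2 j, (j < k)%N & a j <= x < a j.+1.
  move=> x x0; elim=> [|k IH] kn xk.
    by move: xk; rewrite a0 => /(le_lt_trans x0); rewrite ltxx.
  case: (leP (a k) x) => akx.
    by exists k => //; rewrite akx xk.
  by case: (IH (ltnW kn) akx) => j jk hj; exists j => //; apply: ltnW.
have D : forall x, X x -> (forall j, (j < n)%N -> x != a j) -> tau x = x.
  move=> x /andP[x0 x1] nx.
  have [j jn /andP[ajx xaj]] : exists2 j, (j < n)%N & a j <= x < a j.+1.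
    by apply: loc => //; rewrite an.
  apply: (idI j jn) => //.
  by rewrite lt_neqAle ajx andbT eq_sym nx.

have R0 : Rcount tau n a = 0%N.
  rewrite /Rcount; apply: eq_card0 => j; apply/negbTE/negP => /set_mem /= /asboolP dec.
    have jn := ltn_ord j.
    have aj := ainc j jn.
    have x1 : a j < (2 * a j + a j.+1) / 3 by lra.
    have x2 : (2 * a j + a j.+1) / 3 < (a j + 2 * a j.+1) / 3 by lra.
    have x3 : (a j + 2 * a j.+1) / 3 < a j.+1 by lra.
    have h := dec _ _ x1 x2 x3.
    rewrite (idI j jn _ x1 (lt_trans x2 x3)) (idI j jn _ (lt_trans x1 x2) x3) in h.
    lra.
have bet : forall j, (j < n)%N -> beta tau a j = a j.
  move=> j jn; rewrite /beta.
  have -> : tau @` `]a j, a j.+1[%classic = `]a j, a j.+1[%classic.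
    apply/seteqP; split => y.
      move=> [x + <-]; rewrite /= in_itv /= => /andP[h1 h2].
      by rewrite (idI j jn) // in_itv /= h1 h2.
    rewrite /= in_itv /= => /andP[h1 h2]; exists y; last exact: (idI j jn).
    by rewrite /= in_itv /= h1 h2.
  by apply: inf_itv; rewrite bnd_simp; apply: ainc.
have S1 : forall j, (j < n)%N -> sigmaP tau n a (tau (a j)) = a j.
  move=> j jn; rewrite /sigmaP; case: pickP => [k /eqP Hk | none].
    rewrite bet //; apply: tinj Hk; apply: mem_set; exact: aX.
  by have := none (Ordinal jn); rewrite eqxx.
have S2 : forall y, (forall j, (j < n)%N -> tau (a j) != y) -> sigmaP tau n a y = y.
  move=> y ny; rewrite /sigmaP; case: pickP => [k Hk | //].
  by move: (ny k (ltn_ord k)); rewrite Hk.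
have pre : forall x, supp tau x -> exists2 j, (j < n)%N & x = a j.
  move=> x [Xx tx]; apply: contrapT => nj; move/eqP: tx; apply.
  apply: D => // j jn; apply/eqP => xa; apply: nj; by exists j.
have sg : forall x, supp tau x -> supp tau (tau x).
  move=> x [Xx tx]; split; first exact: tX.
  apply/eqP => e; move/eqP: tx; apply; apply: tinj e; apply: mem_set => //; exact: tX.
have post : forall x, supp tau x -> exists2 j, (j < n)%N & tau (a j) = x /\ supp tau (a j).
  move=> x sx; have [Xx tx] := sx.
  have [z Xz tz] := tsurj x Xx.
  have sz : supp tau z.
    split => //; apply/eqP => e; move/eqP: tx; apply; by rewrite -tz e.
  have [j jn ez] := pre z sz.
  by exists j => //; rewrite -ez.
have sf : forall x, supp tau x -> supp tau (sigmaP tau n a x).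
  by move=> x /post [j jn [<- sj]]; rewrite S1.
have fg : forall x, supp tau x -> sigmaP tau n a (tau x) = x.
  by move=> x /pre [j jn ->]; rewrite S1.
have gf : forall x, supp tau x -> tau (sigmaP tau n a x) = x.
  by move=> x /post [j jn [<- sj]]; rewrite S1.
have esupp : supp (sigmaP tau n a) = supp tau.
  apply/seteqP; split => x.
    move=> [Xx sx].
    case: (pselect (exists2 j, (j < n)%N & tau (a j) = x)) => [[j jn ej]|nj].
      rewrite -ej; apply: sg; split; first exact: aX.
      by move: sx; rewrite -ej S1 // eq_sym.
    move/eqP: sx; case; apply: S2 => j jn; apply/eqP => ej; apply: nj; by exists j.
  move=> sx; have [Xx _] := sx; split => //.
  have [j jn [ej [_ sj]]] := post x sx.
  by rewrite -ej S1 // eq_sym.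
rewrite /epsilon R0 /=.
exact: fs_sign_inv.
Qed.
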